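(* Let $\phi\in\mathrm{QJac}_L$. Then for all $\lambda,\mu\in\mathbb Z^n$, \[ \phi(z+\lambda\tau+\mu,\tau) = e\left(-\lambda^TL\lambda\tau-2\lambda^TLz\right)\sum_{i\ge0}\frac{(-1)^i}{i!}\mathsf T_\lambda^i\phi(z,\tau) = e\left(-\lambda^TL\lambda\tau-2\lambda^TLz\right)\exp(-\mathsf T_\lambda)\phi(z,\tau). \]
   Context: Notation: $e(x) = \exp(2\pi ix)$, $q = e(\tau)$, $\tau\in\mathbb H$, $z\in\mathbb C^n$; $L$ is a rational symmetric $n\times n$ matrix with $2L$ integral with even diagonal. Let $\nu = 1/(8\pi\mathrm{Im}\tau)$ and $\alpha_i = \mathrm{Im}z_i/\mathrm{Im}\tau$. An almost holomorphic weak Jacobi form of weight $k$ and index $L$ is a finite sum $\Phi = \sum_{i,j}\phi_{i,j}(z,\tau)\nu^i\alpha^j$ ($j\in\mathbb Z_{\ge0}^n$, $\alpha^j = \prod\alpha_l^{j_l}$), each $\phi_{i,j}$ holomorphic with Fourier expansion $\sum_{m\ge0}\sum_{r\in\mathbb Z^n}c(m,r)q^me(z\cdot r)$ in $|q|<1$, satisfying $\Phi(\frac z{c\tau+d},\frac{a\tau+b}{c\tau+d}) = (c\tau+d)^ke(\frac{cz^TLz}{c\tau+d})\Phi(z,\tau)$ for all $\begin{pmatrix} a&b\\c&d\end{pmatrix}\in SL_2(\mathbb Z)$ and $\Phi(z+\lambda\tau+\mu,\tau) = e(-\lambda^TL\lambda\tau-2\lambda^TLz)\Phi(z,\tau)$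 for $\lambda,\mu\in\mathbb Z^n$. A quasi-Jacobi form of weight $k$ and index $L$ is $\phi = \phi_{0,0}$ for such a $\Phi$ (which is then unique, the completion of $\phi$); $\mathrm{QJac}_{k,L}$ is their space and $\mathrm{QJac}_L = \bigoplus_k\mathrm{QJac}_{k,L}$. Treating $\tau,\nu,z_i,\alpha_i$ as independent variables, $\mathsf T_{\alpha_i}\phi$ is the quasi-Jacobi form whose completion is $\frac{\partial\Phi}{\partial\alpha_i}$ (i.e. the constant term of $\partial\Phi/\partial\alpha_i$), and $\mathsf T_\lambda = \sum_i\lambda_i\mathsf T_{\alpha_i}$ for $\lambda\in\mathbb Z^n$. *)

(* Defs.v *)
From HB Require Import structures.
From mathcomp Require Import all_boot all_order all_algebra.
From mathcomp Require Import reals sequences exp trigo.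
From mathcomp Require Import complex.
Set Implicit Arguments. Unset Strict Implicit. Unset Printing Implicit Defensive.
Import Order.TTheory GRing.Theory Num.Theory.
Local Open Scope ring_scope.

Section QJ.
Variable R : realType.
Local Notation C := R[i].

Definition cR (x : R) : C := Complex x 0.
Definition ci : C := Complex 0 1.
Definition re (x : C) : R := let: Complex a _ := x in a.
Definition im (x : C) : R := let: Complex _ b := x in b.

Definition cmod (x : C) : R := Num.sqrt (re x ^+ 2 + im x ^+ 2).

Definition cexp (w : C) : C :=
  Complex (expR (re w) * cos (im w)) (expR (re w) * sin (im w)).

Definition ee (x : C) : C := cexp (cR (2 * pi) * ci * x).

Variable n : nat.
Local Notation vec := ('I_n -> C).

Definition nu (tau : C) : C := cR ((8 * pi * im tau)^-1).
Definition alpha (z : vec) (tau : C) (a : 'I_n) : C := cR (im (z a) / im tau).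

Definition good_index (L : 'M[rat]_n) : Prop :=
  L^T = L /\
  (forall a b, exists m : int, 2 * L a b = m%:~R) /\
  (forall a, exists m : int, 2 * L a a = (2 * m)%:~R).

Definition Lq (L : 'M[rat]_n) (u v : vec) : C :=
  \sum_(a < n) \sum_(b < n) u a * ratr (L a b) * v b.

Definition ivec (l : 'I_n -> int) : vec := fun a => (l a)%:~R.

Definition holomorphic (f : vec -> C -> C) : Prop :=
  forall (z : vec) (tau : C), 0 < im tau ->
  exists (dz : vec) (dtau : C),
  forall eps : R, 0 < eps -> exists2 delta : R, 0 < delta &
  forall (h : vec) (k : C), (forall a, cmod (h a) < delta) -> cmod k < delta ->
    0 < im (tau + k) ->
    cmod (f (fun a => z a + h a) (tau + k) - f z tau
          - \sum_(a < n) dz a * h a - dtau * k)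
    <= eps * (\sum_(a < n) cmod (h a) + cmod k).

(* the (m, r)-term of a Fourier expansion, with r in [-N, N]^n encoded *)
Definition fterm (c : nat -> {ffun 'I_n -> int} -> C) (z : vec) (tau : C)
  (N m : nat) (r : {ffun 'I_n -> 'I_(N.*2.+1)}) : C :=
  let r' := [ffun a => (r a)%:Z - N%:Z] in
  c m r' * ee (m%:R * tau + \sum_(a < n) (r' a)%:~R * z a).

(* f(z,tau) = sum_{m >= 0} sum_{r in Z^n} c(m,r) q^m e(z.r) for all z and
   tau in H (|q| < 1), the family being absolutely summable: partial sums over
   the boxes {0..N-1} x [-N,N]^n converge to f(z,tau) and the sums of moduli
   are bounded. *)
Definition fourier_expansion (f : vec -> C -> C) : Prop :=
  exists c : nat -> {ffun 'I_n -> int} -> C,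
  forall (z : vec) (tau : C), 0 < im tau ->
    (exists B : R, forall N : nat,
       \sum_(m < N) \sum_(r : {ffun 'I_n -> 'I_(N.*2.+1)})
          cmod (fterm c z tau m r) <= B) /\
    (forall eps : R, 0 < eps -> exists N0 : nat, forall N : nat, (N0 <= N)%N ->
       cmod (\sum_(m < N) \sum_(r : {ffun 'I_n -> 'I_(N.*2.+1)})
                fterm c z tau m r - f z tau) < eps).

(* A finite sum  Phi = sum_{i,j} phi_{i,j} nu^i alpha^j  is given by a
   degree bound D and a coefficient family phi i j (j a multi-index in N^n)
   vanishing outside i <= D, j <= D componentwise. *)
Definition coef_family := nat -> {ffun 'I_n -> nat} -> vec -> C -> C.

Definition bounded_support (D : nat) (phi : coef_family) : Prop :=
  forall (i : nat) (j : {ffun 'I_n -> nat}), ((D < i)%N || [exists a, (D < j a)%N]) -> phi i j = fun _ _ => 0.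

Definition mindex (D : nat) (j : {ffun 'I_n -> 'I_D.+1}) : {ffun 'I_n -> nat} :=
  [ffun a => nat_of_ord (j a)].

Definition eval_ah (D : nat) (phi : coef_family) (z : vec) (tau : C) : C :=
  \sum_(i < D.+1) \sum_(j : {ffun 'I_n -> 'I_D.+1})
     phi i (mindex j) z tau * nu tau ^+ i *
     \prod_(a < n) alpha z tau a ^+ (mindex j a).

Definition ah_weak_jacobi (k : int) (L : 'M[rat]_n) (D : nat)
    (phi : coef_family) : Prop :=
  bounded_support D phi /\
  (forall i j, holomorphic (phi i j) /\ fourier_expansion (phi i j)) /\
  (forall a b c d : int, a * d - b * c = 1 ->
     forall (z : vec) (tau : C), 0 < im tau ->
     let ct := c%:~R * tau + d%:~R in
     eval_ah D phi (fun l => z l / ct) ((a%:~R * tau + b%:~R) / ct)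
       = ct ^ k * ee (c%:~R * Lq L z z / ct) * eval_ah D phi z tau) /\
  (forall lam mu : 'I_n -> int, forall (z : vec) (tau : C), 0 < im tau ->
     eval_ah D phi (fun l => z l + (lam l)%:~R * tau + (mu l)%:~R) tau
       = ee (- (Lq L (ivec lam) (ivec lam) * tau) - 2 * Lq L (ivec lam) z)
         * eval_ah D phi z tau).

(* the quasi-Jacobi form phi_{0,0} of a completion *)
Definition mzero : {ffun 'I_n -> nat} := [ffun => 0%N].
Definition qj_part (phi : coef_family) : vec -> C -> C := phi 0%N mzero.

(* formal derivative d/d alpha_l (nu, alpha, z, tau independent) *)
Definition bump (j : {ffun 'I_n -> nat}) (l : 'I_n) : {ffun 'I_n -> nat} :=
  [ffun a => if a == l then (j a).+1 else j a].

(* d/d lambda := sum_l lambda_l d/d alpha_l acting on the coefficients *)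
Definition dlam (lam : 'I_n -> int) (phi : coef_family) : coef_family :=
  fun i j z tau =>
    \sum_(l < n) (lam l)%:~R * ((j l).+1)%:R * phi i (bump j l) z tau.

(* T_lambda^m phi : the quasi-Jacobi form whose completion is
   (d/d lambda)^m Phi, i.e. the constant term of (d/d lambda)^m Phi *)
Definition Tlam_pow (lam : 'I_n -> int) (m : nat) (phi : coef_family) :
  vec -> C -> C := qj_part (iter m (dlam lam) phi).

End QJ.
Arguments ivec {R n} l a.
Arguments Tlam_pow {R n} lam m phi.

(* Main.v *)
Require Import Defs.
From HB Require Import structures.
From mathcomp Require Import all_boot all_order all_algebra.
From mathcomp Require Import reals sequences exp trigo.
From mathcomp Require Import complex.
From mathcomp Require Import boolp classical_sets topology normedtype derive.
From mathcomp Require Import ring lra zify.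
From Stdlib Require Import Lia.
Import Order.TTheory GRing.Theory Num.Theory.
Import numFieldNormedType.Exports.
Set Implicit Arguments. Unset Strict Implicit. Unset Printing Implicit Defensive.
Local Open Scope ring_scope.

Section Basics.
Variable R : realType.
Local Notation C := R[i].
Lemma cRE (x : R) : cR x = x%:C%C. Proof. by []. Qed.
Lemma cRD (x y : R) : cR (x + y) = cR x + cR y. Proof. by rewrite !cRE rmorphD. Qed.
Lemma cRM (x y : R) : cR (x * y) = cR x * cR y. Proof. by rewrite !cRE rmorphM. Qed.
Lemma cRN (x : R) : cR (- x) = - cR x. Proof. by rewrite !cRE rmorphN. Qed.
Lemma cRB (x y : R) : cR (x - y) = cR x - cR y. Proof. by rewrite !cRE rmorphB. Qed.
Lemma cR0 : cR 0 = 0 :> C. Proof. by []. Qed.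
Lemma cR1 : cR 1 = 1 :> C. Proof. by []. Qed.
Lemma cRV (x : R) : cR x^-1 = (cR x)^-1. Proof. by rewrite !cRE fmorphV. Qed.
Lemma cRX (x : R) k : cR (x ^+ k) = (cR x) ^+ k. Proof. by rewrite !cRE rmorphXn. Qed.
Lemma cRn k : cR (k%:R) = k%:R :> C. Proof. by rewrite cRE rmorph_nat. Qed.
Lemma cRz (k : int) : cR (k%:~R) = k%:~R :> C. Proof. by rewrite cRE rmorph_int. Qed.
Lemma cRq (q : rat) : cR (ratr q) = ratr q :> C. Proof. by rewrite cRE fmorph_rat. Qed.
Lemma cR_inj (x y : R) : cR x = cR y -> x = y. Proof. by case. Qed.
Lemma cmodE (x : C) : cmod x = Normc.normc x. Proof. by case: x. Qed.
Lemma cmod_ge0 (x : C) : 0 <= cmod x. Proof. exact: sqrtr_ge0. Qed.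
Lemma cmodD (x y : C) : cmod (x + y) <= cmod x + cmod y.
Proof. rewrite !cmodE; exact: (@le_normcD R x y). Qed.
Lemma cmodM (x y : C) : cmod (x * y) = cmod x * cmod y.
Proof. by rewrite !cmodE Normc.normcM. Qed.
Lemma cmodN (x : C) : cmod (- x) = cmod x.
Proof. rewrite !cmodE; exact: (@normcN R x). Qed.
Lemma cmod0 : cmod (0 : C) = 0.
Proof. by rewrite cmodE Normc.normc0. Qed.
Lemma cmod_eq0 (x : C) : cmod x = 0 -> x = 0.
Proof. by rewrite cmodE => /Normc.eq0_normc. Qed.
Lemma cmod_cR (r : R) : cmod (cR r) = `|r|.
Proof. by rewrite /cmod /= expr0n /= addr0 sqrtr_sqr. Qed.
Lemma cmod_ci : cmod (ci R) = 1.
Proof. by rewrite /cmod /= expr0n /= add0r expr1n sqrtr1. Qed.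
Lemma cmodB (x y : C) : cmod (x - y) <= cmod x + cmod y.
Proof. by rewrite -(cmodN y) cmodD. Qed.
Lemma cmod_sum (I : Type) (r : seq I) (F : I -> C) :
  cmod (\sum_(i <- r) F i) <= \sum_(i <- r) cmod (F i).
Proof.
apply: (big_rec2 (fun a b => cmod a <= b)); first by rewrite cmod0.
by move=> i a b _ hab; apply: le_trans (cmodD _ _) _; rewrite lerD2l.
Qed.
Lemma cmod_small (x : C) : (forall eps, 0 < eps -> cmod x <= eps) -> x = 0.
Proof.
move=> h; apply: cmod_eq0; apply/eqP; rewrite eq_le cmod_ge0 andbT.
apply/negPn/negP; rewrite -ltNge => hx.
have := h _ (divr_gt0 hx (ltr0n _ 2)).
move=> h2; lra.
Qed.
Lemma imD (x y : C) : im (x + y) = im x + im y. Proof. by case: x; case: y. Qed.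
Lemma reD (x y : C) : re (x + y) = re x + re y. Proof. by case: x; case: y. Qed.
Lemma imN (x : C) : im (- x) = - im x. Proof. by case: x. Qed.
Lemma imB (x y : C) : im (x - y) = im x - im y. Proof. by rewrite imD imN. Qed.
Lemma imcR (r : R) : im (cR r) = 0. Proof. by []. Qed.
Lemma recR (r : R) : re (cR r) = r. Proof. by []. Qed.
Lemma im_cicR (r : R) : im (ci R * cR r) = r.
Proof. by rewrite /= !mul0r mul1r add0r. Qed.
Lemma re_cicR (r : R) : re (ci R * cR r) = 0.
Proof. by rewrite /= !mul0r mulr0 subrr. Qed.
Lemma imcRM (r : R) (x : C) : im (cR r * x) = r * im x.
Proof. by case: x => a b; rewrite /= mul0r addr0. Qed.
Lemma recRM (r : R) (x : C) : re (cR r * x) = r * re x.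
Proof. by case: x => a b; rewrite /= mul0r subr0. Qed.
Lemma ci2 : ci R * ci R = -1 :> C.
Proof. by apply/eqP; rewrite eq_complex /= !(mul0r,mulr0,mul1r,subr0,add0r,sub0r,oppr0) !eqxx. Qed.
End Basics.
Section Dif.
Variable R : realType.
Local Notation C := R[i].
Definition dif1 (F : R -> C) (F0 D : C) := forall eps : R, 0 < eps ->
  exists2 d : R, 0 < d & forall t : R, `|t| < d -> cmod (F t - F0 - cR t * D) <= eps * `|t|.
Lemma dif1_ext F G F0 G0 D E : (forall t, F t = G t) -> F0 = G0 -> D = E ->
  dif1 F F0 D -> dif1 G G0 E.
Proof. move=> h <- <- hF eps e0; have [d d0 hd] := hF eps e0; exists d => // t ht; rewrite -h; exact: hd. Qed.
Lemma dif1_cst c : dif1 (fun _ => c) c 0.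
Proof. move=> eps e0; exists 1 => // t _; rewrite subrr mulr0 subr0 cmod0; by rewrite mulr_ge0 // ltW. Qed.
Lemma dif1_id : dif1 (fun t => cR t) 0 1.
Proof. move=> eps e0; exists 1 => // t _; rewrite subr0 mulr1 subrr cmod0; by rewrite mulr_ge0 // ltW. Qed.
Lemma dif1_add F G F0 G0 D E : dif1 F F0 D -> dif1 G G0 E ->
  dif1 (fun t => F t + G t) (F0 + G0) (D + E).
Proof.
move=> hF hG eps e0.
have e2 : 0 < eps / 2 by rewrite divr_gt0.
have [d1 d10 h1] := hF _ e2; have [d2 d20 h2] := hG _ e2.
exists (Num.min d1 d2); first by rewrite lt_min d10.
move=> t; rewrite lt_min => /andP[t1 t2].
have -> : F t + G t - (F0 + G0) - cR t * (D + E) = (F t - F0 - cR t * D) + (G t - G0 - cR t * E) by ring.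
apply: le_trans (cmodD _ _) _.
have := h1 _ t1; have := h2 _ t2; lra.
Qed.
Lemma dif1_mul F G F0 G0 D E : dif1 F F0 D -> dif1 G G0 E ->
  dif1 (fun t => F t * G t) (F0 * G0) (D * G0 + F0 * E).
Proof.
move=> hF hG eps e0.
set MG := cmod G0 + cmod E + 1.
set K := MG + cmod F0 + 1.
have K0 : 0 < K by rewrite /K /MG; have := cmod_ge0 G0; have := cmod_ge0 E; have := cmod_ge0 F0; lra.
set e1 := Num.min 1 (eps / (2 * K)).
have e10 : 0 < e1 by rewrite lt_min ltr01 /= divr_gt0 // mulr_gt0.
have e11 : e1 <= 1 by rewrite ge_min lexx.
have e1K : e1 * K <= eps / 2.
  rewrite -ler_pdivlMr // ge_min; apply/orP; right.
  by rewrite -mulrA -invfM mulrC.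
set L := cmod D * (cmod E + 1) + 1.
have L0 : 0 < L by rewrite /L; have := cmod_ge0 D; have := cmod_ge0 E; nra.
have [d1 d10 h1] := hF _ e10; have [d2 d20 h2] := hG _ e10.
have e2L : 0 < eps / 2 / L by rewrite !divr_gt0.
exists (Num.min (Num.min d1 d2) (Num.min 1 (eps / 2 / L))).
  by rewrite !lt_min d10 d20 ltr01 e2L.
move=> t; rewrite !lt_min => /andP[/andP[t1 t2] /andP[t3 t4]].
have {}h1 := h1 _ t1; have {}h2 := h2 _ t2.
set rF := F t - F0 - cR t * D in h1; set rG := G t - G0 - cR t * E in h2.
have -> : F t * G t - F0 * G0 - cR t * (D * G0 + F0 * E) =
  rF * G t + F0 * rG + cR t * D * (G t - G0) by rewrite /rF /rG; ring.
have hGG : cmod (G t - G0) <= `|t| * (cmod E + 1).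
  have -> : G t - G0 = cR t * E + rG by rewrite /rG; ring.
  apply: le_trans (cmodD _ _) _; rewrite cmodM cmod_cR.
  have := normr_ge0 t; nra.
have hG1 : cmod (G t) <= MG.
  have -> : G t = G0 + (G t - G0) by ring.
  apply: le_trans (cmodD _ _) _; rewrite /MG.
  have := normr_ge0 t; have := cmod_ge0 E; nra.
have ht4 : `|t| * L <= eps / 2 by rewrite -ler_pdivlMr // ltW.
apply: le_trans (cmodD _ _) _; apply: le_trans (lerD (cmodD _ _) (lexx _)) _.
rewrite !cmodM cmod_cR.
have a : cmod rF * cmod (G t) <= e1 * `|t| * MG by rewrite ler_pM ?cmod_ge0.
have b : cmod F0 * cmod rG <= cmod F0 * (e1 * `|t|) by rewrite ler_pM ?cmod_ge0.
have c : `|t| * cmod D * cmod (G t - G0) <= `|t| * cmod D * (`|t| * (cmod E + 1)).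
  by rewrite ler_pM ?cmod_ge0 ?mulr_ge0 ?cmod_ge0.
have d : `|t| * (e1 * K) <= `|t| * (eps / 2) by apply: ler_wpM2l.
have f : `|t| * (`|t| * L) <= `|t| * (eps / 2) by apply: ler_wpM2l.
rewrite /L /K in d f.
have := mulr_ge0 (normr_ge0 t) (ltW e10); have := mulr_ge0 (normr_ge0 t) (normr_ge0 t); lra.
Qed.
End Dif.
Section Dif2.
Variable R : realType.
Local Notation C := R[i].
Lemma dif1_scal c (F : R -> C) F0 D : dif1 F F0 D -> dif1 (fun t => c * F t) (c * F0) (c * D).
Proof.
move=> h; have := dif1_mul (dif1_cst c) h.
by apply: dif1_ext => //; rewrite mul0r add0r.
Qed.
Lemma dif1_sum_seq (I : Type) (r : seq I) (F : I -> R -> C) F0 D :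
  (forall i, dif1 (F i) (F0 i) (D i)) ->
  dif1 (fun t => \sum_(i <- r) F i t) (\sum_(i <- r) F0 i) (\sum_(i <- r) D i).
Proof.
move=> h; elim: r => [|x r IH].
  by apply: dif1_ext (dif1_cst 0) => [t||]; rewrite big_nil.
have := dif1_add (h x) IH; apply: dif1_ext => [t||]; by rewrite big_cons.
Qed.
Lemma dif1_sum (I : finType) (F : I -> R -> C) F0 D :
  (forall i, dif1 (F i) (F0 i) (D i)) ->
  dif1 (fun t => \sum_i F i t) (\sum_i F0 i) (\sum_i D i).
Proof. exact: dif1_sum_seq. Qed.
Lemma dif1_poly (p : {poly C}) : dif1 (fun t => p.[cR t]) p.[0] (p^`()).[0].
Proof.
elim/poly_ind: p => [|q c IH].
  by apply: dif1_ext (dif1_cst 0) => [t||]; rewrite ?deriv0 horner0.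
have := dif1_add (dif1_mul IH (@dif1_id R)) (dif1_cst c).
apply: dif1_ext => [t||]; rewrite ?derivMXaddC !hornerE //; try ring.
Qed.
Lemma dif1_uniq0 F F0 D : dif1 F F0 D -> (exists2 r : R, 0 < r & forall t, `|t| < r -> F t = 0) ->
  F0 = 0 /\ D = 0.
Proof.
move=> h [r r0 hr].
have F00 : F0 = 0.
  apply: cmod_small => eps e0; have [d d0 hd] := h eps e0.
  have := hd 0; rewrite normr0 => /(_ d0); rewrite hr ?normr0 // mulr0 mul0r !subr0 sub0r cmodN.
  by move=> /le_trans; apply; apply: ltW.
split => //; apply: cmod_small => eps e0; have [d d0 hd] := h eps e0.
set t := Num.min d r / 2.
have t0 : 0 < t by rewrite divr_gt0 // lt_min d0 r0.
have tm : t < Num.min d r by rewrite /t ltr_pdivrMr // ltr_pMr ?ltr1n // lt_min d0 r0.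
move: tm; rewrite lt_min => /andP[td tr].
have := hd t; rewrite gtr0_norm // => /(_ td); rewrite hr ?gtr0_norm // F00 subr0 sub0r cmodN cmodM cmod_cR gtr0_norm //.
by rewrite mulrC ler_pM2r.
Qed.
End Dif2.
Section Good.
Variable R : realType.
Local Notation C := R[i].
Variable n : nat.
Local Notation vec := ('I_n -> C).
Definition rpz (z : vec) (v : 'I_n -> R) (t : R) : vec := fun a => z a + cR (t * v a).
Definition rpt (tau : C) (k : R) (t : R) : C := tau + cR (t * k).
Definition ipz (z : vec) (v : 'I_n -> R) (t : R) : vec := fun a => z a + ci R * cR (t * v a).
Definition ipt (tau : C) (k : R) (t : R) : C := tau + ci R * cR (t * k).
Definition cr_at (f : vec -> C -> C) z tau v k := exists D : C,
  dif1 (fun t => f (rpz z v t) (rpt tau k t)) (f z tau) D /\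
  dif1 (fun t => f (ipz z v t) (ipt tau k t)) (f z tau) (ci R * D).
Definition good (f : vec -> C -> C) := forall z tau, 0 < im tau -> forall v k, cr_at f z tau v k.
Lemma good_mul f g : good f -> good g -> good (fun z tau => f z tau * g z tau).
Proof.
move=> hf hg z tau ht v k.
have [D1 [h1 h1']] := hf z tau ht v k; have [D2 [h2 h2']] := hg z tau ht v k.
exists (D1 * g z tau + f z tau * D2); split; first exact: dif1_mul.
by apply: dif1_ext (dif1_mul h1' h2') => //; ring.
Qed.
Lemma good_add f g : good f -> good g -> good (fun z tau => f z tau + g z tau).
Proof.
move=> hf hg z tau ht v k.
have [D1 [h1 h1']] := hf z tau ht v k; have [D2 [h2 h2']] := hg z tau ht v k.
exists (D1 + D2); split; first exact: dif1_add.
by apply: dif1_ext (dif1_add h1' h2') => //; ring.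
Qed.
Lemma good_cst c : good (fun _ _ => c).
Proof.
move=> z tau ht v k; exists 0; split; first exact: dif1_cst.
by apply: dif1_ext (dif1_cst c) => //; rewrite mulr0.
Qed.
Lemma good_scal c f : good f -> good (fun z tau => c * f z tau).
Proof. by move=> hf; apply: good_mul => //; apply: good_cst. Qed.
Lemma good_opp f : good f -> good (fun z tau => - f z tau).
Proof.
move=> hf; have := good_scal (-1) hf; congr good.
by apply: funext => z; apply: funext => tau; rewrite mulN1r.
Qed.
Lemma good_sub f g : good f -> good g -> good (fun z tau => f z tau - g z tau).
Proof. by move=> hf hg; apply: good_add => //; apply: good_opp. Qed.
Lemma good_sum (I : finType) (F : I -> vec -> C -> C) :
  (forall i, good (F i)) -> good (fun z tau => \sum_i F i z tau).
Proof.
move=> hF.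
have : forall r : seq I, good (fun z tau => \sum_(i <- r) F i z tau).
  elim=> [|x r IH].
    have := good_cst 0; congr good; apply: funext => z; apply: funext => tau; by rewrite big_nil.
  have := good_add (hF x) IH; congr good; apply: funext => z; apply: funext => tau; by rewrite big_cons.
by apply.
Qed.
Lemma good_ext f g : (forall z tau, f z tau = g z tau) -> good f -> good g.
Proof. by move=> h; congr good; apply: funext => z; apply: funext => tau. Qed.
Lemma holo_dir (f : vec -> C -> C) z tau (dz : vec) (dtau : C) v k (s : C) :
  (forall eps : R, 0 < eps -> exists2 delta : R, 0 < delta &
   forall (h : vec) (k : C), (forall a, cmod (h a) < delta) -> cmod k < delta ->
    0 < im (tau + k) ->
    cmod (f (fun a => z a + h a) (tau + k) - f z tau
          - \sum_(a < n) dz a * h a - dtau * k)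
    <= eps * (\sum_(a < n) cmod (h a) + cmod k)) ->
  cmod s = 1 ->
  (forall t, `|t| * (\sum_a `|v a| + `|k| + 1) < im tau -> 0 < im (tau + s * cR (t * k))) ->
  0 < im tau ->
  dif1 (fun t => f (fun a => z a + s * cR (t * v a)) (tau + s * cR (t * k))) (f z tau)
    (s * (\sum_a dz a * cR (v a) + dtau * cR k)).
Proof.
move=> hol s1 him ht eps e0.
set V := \sum_a `|v a| + `|k|.
have V0 : 0 <= V by rewrite /V addr_ge0 ?sumr_ge0.
have V1 : 0 < V + 1 by rewrite ltr_pwDr.
have [dl dl0 hd] := hol (eps / (V + 1)) (divr_gt0 e0 V1).
exists (Num.min (dl / (V + 1)) (im tau / (V + 1))); first by rewrite lt_min !divr_gt0.
move=> t; rewrite lt_min => /andP[t1 t2].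
have tV : `|t| * V <= `|t| * (V + 1) by rewrite ler_wpM2l // lerDl.
have t1' : `|t| * (V + 1) < dl by rewrite -ltr_pdivlMr.
have t2' : `|t| * (V + 1) < im tau by rewrite -ltr_pdivlMr.
have va a : `|v a| <= V.
  rewrite /V (bigD1 a) //= -addrA lerDl addr_ge0 // sumr_ge0 //.
have kV : `|k| <= V by rewrite /V lerDr sumr_ge0.
have hh a : cmod (s * cR (t * v a)) < dl.
  rewrite cmodM s1 mul1r cmod_cR normrM; apply: le_lt_trans t1'.
  by apply: le_trans tV; rewrite ler_wpM2l.
have hk : cmod (s * cR (t * k)) < dl.
  rewrite cmodM s1 mul1r cmod_cR normrM; apply: le_lt_trans t1'.
  by apply: le_trans tV; rewrite ler_wpM2l.
have E : \sum_a dz a * (s * cR (t * v a)) + dtau * (s * cR (t * k)) =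
   cR t * (s * (\sum_a dz a * cR (v a) + dtau * cR k)).
  rewrite mulrDr mulrDr mulr_sumr mulr_sumr cRM; congr (_ + _); last by ring.
  by apply: eq_bigr => a _; rewrite cRM; ring.
have := hd _ _ hh hk (him _ t2'); rewrite -addrA -opprD E => /le_trans; apply.
have -> : \sum_a cmod (s * cR (t * v a)) + cmod (s * cR (t * k)) = `|t| * V.
  rewrite /V mulrDr mulr_sumr cmodM s1 mul1r cmod_cR normrM; congr (_ + _).
  by apply: eq_bigr => a _; rewrite cmodM s1 mul1r cmod_cR normrM.
have VV : V / (V + 1) <= 1 by rewrite ler_pdivrMr // mul1r lerDl.
have -> : eps / (V + 1) * (`|t| * V) = (eps * `|t|) * (V / (V + 1)) by ring.
by rewrite ler_piMr // ?mulr_ge0 ?divr_ge0 // ltW.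
Qed.
Lemma holo_good f : holomorphic f -> good f.
Proof.
move=> hol z tau ht v k.
have [dz [dtau H]] := hol z tau ht.
exists (\sum_a dz a * cR (v a) + dtau * cR k); split.
  have c1 : cmod (1 : C) = 1 by rewrite -cR1 cmod_cR normr1.
  have him1 : forall t, `|t| * (\sum_a `|v a| + `|k| + 1) < im tau -> 0 < im (tau + 1 * cR (t * k)).
    by move=> t _; rewrite mul1r imD imcR addr0.
  have := @holo_dir f z tau dz dtau v k 1 H c1 him1 ht.
  apply: dif1_ext => [t||]; rewrite ?mul1r //.
  by rewrite /rpz /rpt; congr f; apply: funext => a; rewrite mul1r.
have him2 : forall t, `|t| * (\sum_a `|v a| + `|k| + 1) < im tau -> 0 < im (tau + ci R * cR (t * k)).
  move=> t ht2; rewrite imD im_cicR; have : `|t * k| < im tau.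
    rewrite normrM; apply: le_lt_trans ht2; rewrite ler_wpM2l //.
    have : 0 <= \sum_a `|v a| by rewrite sumr_ge0.
    lra.
  move=> hh; have := ler_norm (- (t * k)); rewrite normrN; lra.
exact: (@holo_dir f z tau dz dtau v k (ci R) H (cmod_ci R) him2 ht).
Qed.
End Good.
Section GL.
Variable R : realType.
Local Notation C := R[i].
Variable n : nat.
Local Notation vec := ('I_n -> C).
Lemma GL (I J : finType) (H : I -> J -> vec -> C -> C) z tau v k (p : I -> J -> {poly C}) :
 (forall i j, cr_at (H i j) z tau v k) ->
 (exists2 r : R, 0 < r & forall t, `|t| < r ->
    \sum_i \sum_j H i j (rpz z v t) (rpt tau k t) * (p i j).[0] = 0 /\
    \sum_i \sum_j H i j (ipz z v t) (ipt tau k t) * (p i j).[cR t] = 0) ->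
 \sum_i \sum_j H i j z tau * ((p i j)^`()).[0] = 0.
Proof.
move=> hc [r r0 hr].
have hc' : forall i, exists Di : J -> C, forall j,
   dif1 (fun t => H i j (rpz z v t) (rpt tau k t)) (H i j z tau) (Di j) /\
   dif1 (fun t => H i j (ipz z v t) (ipt tau k t)) (H i j z tau) (ci R * Di j).
  move=> i; have [Di hDi] := choice (hc i); by exists Di.
have [D hD] := choice hc'.
have d1 := dif1_sum (fun i => dif1_sum (fun j => dif1_mul (hD i j).1 (dif1_cst (p i j).[0]))).
have d2 := dif1_sum (fun i => dif1_sum (fun j => dif1_mul (hD i j).2 (dif1_poly (p i j)))).
have [_ e1] := dif1_uniq0 d1 (ex_intro2 _ _ r r0 (fun t ht => (hr t ht).1)).
have [_ e2] := dif1_uniq0 d2 (ex_intro2 _ _ r r0 (fun t ht => (hr t ht).2)).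
have -> : \sum_i \sum_j H i j z tau * ((p i j)^`()).[0] =
  \sum_i \sum_j (ci R * D i j * (p i j).[0] + H i j z tau * ((p i j)^`()).[0])
  - ci R * \sum_i \sum_j (D i j * (p i j).[0] + H i j z tau * 0).
  rewrite mulr_sumr -sumrB; apply: eq_bigr => i _.
  rewrite mulr_sumr -sumrB; apply: eq_bigr => j _; ring.
by rewrite e1 e2 mulr0 subr0.
Qed.
End GL.
Section Sep.
Variable R : realType.
Local Notation C := R[i].
Variable n : nat.
Local Notation vec := ('I_n -> C).
Variable B : nat.
Local Notation idx := {ffun 'I_n -> 'I_B.+1}.
Definition mon (i : 'I_B.+1) (j : idx) (z : vec) (tau : C) : C :=
  cR (8 * pi * im tau) ^+ (B - i) * \prod_a alpha z tau a ^+ (j a).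
Definition Zs (H : 'I_B.+1 -> idx -> vec -> C -> C) :=
  forall z tau, 0 < im tau -> \sum_i \sum_j H i j z tau * mon i j z tau = 0.
Definition Gd (H : 'I_B.+1 -> idx -> vec -> C -> C) := forall i j, good (H i j).
Lemma im_rpz (z : vec) v t (a : 'I_n) : im (rpz z v t a) = im (z a).
Proof. by rewrite /rpz imD imcR addr0. Qed.
Lemma im_rpt (tau : C) k t : im (rpt tau k t) = im tau.
Proof. by rewrite /rpt imD imcR addr0. Qed.
Lemma im_ipz (z : vec) v t (a : 'I_n) : im (ipz z v t a) = im (z a) + t * v a.
Proof. by rewrite /ipz imD im_cicR. Qed.
Lemma im_ipt (tau : C) k t : im (ipt tau k t) = im tau + t * k.
Proof. by rewrite /ipt imD im_cicR. Qed.
Lemma mon_rp i j (z : vec) tau v k t : mon i j (rpz z v t) (rpt tau k t) = mon i j z tau.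
Proof.
rewrite /mon im_rpt; congr (_ * _); apply: eq_bigr => a _.
by rewrite /alpha im_rpz im_rpt.
Qed.
Lemma euler_nu H : Gd H -> Zs H -> Zs (fun i j z tau => (B - i)%:R * H i j z tau).
Proof.
move=> hg hz z tau ht.
set v := fun a => im (z a) / im tau.
set c8 := cR (8 * pi * im tau).
set P := fun (i : 'I_B.+1) (j : idx) =>
  ((c8%:P + cR (8 * pi) *: 'X) ^+ (B - i) * (\prod_a alpha z tau a ^+ j a)%:P).
have tau0 : im tau != 0 by rewrite gt_eqF.
have hgl : \sum_i \sum_j H i j z tau * ((P i j)^`()).[0] = 0.
  apply: (@GL R n _ _ H z tau v 1 P (fun i j => hg i j z tau ht v 1)).
  exists (im tau) => // t htt; split.
    rewrite -[RHS](hz (rpz z v t) (rpt tau 1 t)); last by rewrite im_rpt.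
    apply: eq_bigr => i _; apply: eq_bigr => j _; rewrite mon_rp /P /mon !(hornerM, hornerC, horner_exp, hornerD, hornerZ, hornerX, hornerMn).
    by rewrite mulr0 addr0.
  have ht' : 0 < im tau + t * 1.
    by rewrite mulr1; have := ler_norm (- t); rewrite normrN; lra.
  rewrite -[RHS](hz (ipz z v t) (ipt tau 1 t)); last by rewrite im_ipt.
  apply: eq_bigr => i _; apply: eq_bigr => j _; rewrite /P /mon !(hornerM, hornerC, horner_exp, hornerD, hornerZ, hornerX, hornerMn) im_ipt.
  congr (_ * (_ * _)).
    by rewrite /c8 -cRM -cRD; congr (cR _ ^+ _); ring.
  apply: eq_bigr => a _; rewrite /alpha im_ipz im_ipt; congr (cR _ ^+ _).
  rewrite /v; field; rewrite tau0 andbT; rewrite mulr1 in ht'; by rewrite gt_eqF.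
apply: (@eq_trans _ _ (cR (im tau) * \sum_i \sum_j H i j z tau * ((P i j)^`()).[0])); last by rewrite hgl mulr0.
rewrite mulr_sumr; apply: eq_bigr => i _.
rewrite mulr_sumr; apply: eq_bigr => j _.
rewrite /P /mon derivM derivC mulr0 addr0 deriv_exp derivD derivC derivZ derivX add0r !(hornerM, hornerC, horner_exp, hornerD, hornerZ, hornerX, hornerMn).
rewrite mulr0 addr0.
case: (B - i)%N => [|m]; first by rewrite !mulr0n !mul0r !mulr0.
rewrite /c8 -[(m.+1).-1]/m exprSr [cR (8 * pi * im tau)]cRM -mulr_natr.
set X := cR (8 * pi * im tau) ^+ m; set Pi := \prod_a _; set Y := cR (8 * pi); set Z := cR (im tau); set N := m.+1%:R; ring.
Qed.
Lemma euler_al H (l : 'I_n) : Gd H -> Zs H -> Zs (fun i j z tau => (j l : nat)%:R * H i j z tau).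
Proof.
move=> hg hz z tau ht.
set v := fun a => if a == l then im (z l) else 0.
set P := fun (i : 'I_B.+1) (j : idx) => (mon i j z tau)%:P * (1 + 'X) ^+ (j l).
have tau0 : im tau != 0 by rewrite gt_eqF.
have hgl : \sum_i \sum_j H i j z tau * ((P i j)^`()).[0] = 0.
  apply: (@GL R n _ _ H z tau v 0 P (fun i j => hg i j z tau ht v 0)).
  exists 1 => // t htt; split.
    rewrite -[RHS](hz (rpz z v t) (rpt tau 0 t)); last by rewrite im_rpt.
    apply: eq_bigr => i _; apply: eq_bigr => j _; rewrite mon_rp /P.
    by rewrite !(hornerM, hornerC, horner_exp, hornerD, hornerX) addr0 expr1n mulr1.
  rewrite -[RHS](hz (ipz z v t) (ipt tau 0 t)); last by rewrite im_ipt mulr0 addr0.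
  apply: eq_bigr => i _; apply: eq_bigr => j _; rewrite /P.
  rewrite !(hornerM, hornerC, horner_exp, hornerD, hornerX, hornerC).
  congr (_ * _); rewrite /mon im_ipt mulr0 addr0.
  have -> : \prod_a alpha (ipz z v t) (ipt tau 0 t) a ^+ j a =
     (\prod_a alpha z tau a ^+ j a) * (1 + cR t) ^+ j l.
    rewrite (bigD1 l) //= [in RHS](bigD1 l) //= -mulrA [_ * (1 + cR t) ^+ _]mulrC mulrA.
    congr (_ * _).
      rewrite /alpha im_ipz im_ipt mulr0 addr0 /v eqxx -exprMn; congr (_ ^+ _).
      rewrite -cR1 -cRD -cRM; congr cR; field; exact: tau0.
    apply: eq_bigr => a hal; rewrite /alpha im_ipz im_ipt /v (negbTE hal) !mulr0 !addr0 //.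
  by rewrite mulrA.
apply: (@eq_trans _ _ (\sum_i \sum_j H i j z tau * ((P i j)^`()).[0])); last by [].
apply: eq_bigr => i _; apply: eq_bigr => j _.
rewrite /P derivM derivC mul0r add0r deriv_exp derivD derivC derivX add0r.
rewrite !(hornerM, hornerC, horner_exp, hornerD, hornerX, hornerMn, hornerC) addr0 expr1n.
rewrite -mulr_natr; set N := (j l)%:R; set M := mon i j z tau; ring.
Qed.
End Sep.
Section Sep2.
Variable R : realType.
Local Notation C := R[i].
Variable n : nat.
Local Notation vec := ('I_n -> C).
Variable B : nat.
Local Notation idx := {ffun 'I_n -> 'I_B.+1}.
Local Notation fam := ('I_B.+1 -> idx -> vec -> C -> C).
Lemma Zs_ext (H G : fam) : (forall i j z tau, H i j z tau = G i j z tau) -> Zs H -> Zs G.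
Proof.
move=> e hz z tau ht; rewrite -[RHS](hz z tau ht); apply: eq_bigr => i _; apply: eq_bigr => j _.
by rewrite e.
Qed.
Lemma Gd_scal (H : fam) (a : 'I_B.+1 -> idx -> C) : Gd H -> Gd (fun i j z tau => a i j * H i j z tau).
Proof. by move=> hg i j; apply: good_scal. Qed.
Lemma Zs_sub_scal (H : fam) (w : 'I_B.+1 -> idx -> C) c :
  Zs H -> Zs (fun i j z tau => w i j * H i j z tau) -> Zs (fun i j z tau => (w i j - c) * H i j z tau).
Proof.
move=> h1 h2 z tau ht.
have -> : \sum_i \sum_j (w i j - c) * H i j z tau * mon i j z tau =
  \sum_i \sum_j w i j * H i j z tau * mon i j z tau - c * \sum_i \sum_j H i j z tau * mon i j z tau.
  rewrite mulr_sumr -sumrB; apply: eq_bigr => i _; rewrite mulr_sumr -sumrB; apply: eq_bigr => j _.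
  by ring.
by rewrite h2 // h1 // mulr0 subr0.
Qed.
Lemma Zs_filter (w : 'I_B.+1 -> idx -> C)
  (hw : forall H : fam, Gd H -> Zs H -> Zs (fun i j z tau => w i j * H i j z tau))
  (cs : seq nat) (H : fam) : Gd H -> Zs H ->
  Zs (fun i j z tau => (\prod_(c <- cs) (w i j - c%:R)) * H i j z tau).
Proof.
move=> hg hz; elim: cs => [|c cs IH].
  by apply: Zs_ext hz => i j z tau; rewrite big_nil mul1r.
have hK : Gd (fun i j z tau => (\prod_(c <- cs) (w i j - c%:R)) * H i j z tau) by apply: Gd_scal.
have := Zs_sub_scal (c%:R) IH (hw _ hK IH).
by apply: Zs_ext => i j z tau; rewrite big_cons mulrA.
Qed.
Lemma Zs_filters_al (ls : seq 'I_n) (H : fam) : Gd H -> Zs H ->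
  Zs (fun i j z tau => (\prod_(l <- ls) \prod_(c <- iota 1 B) ((j l : nat)%:R - c%:R)) * H i j z tau).
Proof.
move=> hg hz; elim: ls => [|l ls IH].
  by apply: Zs_ext hz => i j z tau; rewrite big_nil mul1r.
have hK : Gd (fun i j z tau => (\prod_(l <- ls) \prod_(c <- iota 1 B) ((j l : nat)%:R - c%:R)) * H i j z tau)
  by apply: Gd_scal.
have := Zs_filter (w := fun i (j : idx) => (j l : nat)%:R) (fun H0 hg0 hz0 => euler_al l hg0 hz0) (iota 1 B) hK IH.
by apply: Zs_ext => i j z tau; rewrite big_cons mulrA.
Qed.
Lemma sep (H : fam) : Gd H -> Zs H -> forall z tau, 0 < im tau -> H ord0 [ffun => ord0] z tau = 0.
Proof.
move=> hg hz z tau ht.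
have hz1 := Zs_filters_al (enum 'I_n) hg hz.
have hg1 : Gd (fun i j z tau => (\prod_(l <- enum 'I_n) \prod_(c <- iota 1 B) ((j l : nat)%:R - c%:R)) * H i j z tau)
  by apply: Gd_scal.
have := Zs_filter (w := fun (i : 'I_B.+1) (j : idx) => (B - i)%:R) (fun H0 hg0 hz0 => euler_nu hg0 hz0) (iota 0 B) hg1 hz1 z ht.
rewrite (bigD1 ord0) //= [X in _ + X]big1 ?addr0; last first.
  move=> i hi; apply: big1 => j _.
  suff -> : \prod_(c <- iota 0 B) ((B - i)%:R - c%:R) = 0 :> C by rewrite !mul0r.
  apply/eqP; rewrite prodf_seq_eq0; apply/hasP; exists (B - i)%N; last by rewrite subrr eqxx.
  rewrite mem_iota add0n /=; have : (0 < i)%N by rewrite lt0n.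
  have := ltn_ord i; lia.
rewrite (bigD1 ([ffun => ord0] : idx)) //= [X in _ + X]big1 ?addr0; last first.
  move=> j hj.
  have [l hl] : exists l, j l != ord0.
    apply/existsP; apply: contraR hj; rewrite negb_exists => /forallP hall.
    by apply/eqP/ffunP => a; rewrite ffunE; have := hall a; rewrite negbK => /eqP.
  suff -> : \prod_(l <- enum 'I_n) \prod_(c <- iota 1 B) ((j l : nat)%:R - c%:R) = 0 :> C
    by rewrite !(mul0r, mulr0).
  apply/eqP; rewrite prodf_seq_eq0; apply/hasP; exists l; first by rewrite mem_enum.
  rewrite prodf_seq_eq0; apply/hasP; exists (j l : nat); last by rewrite subrr eqxx.
  rewrite mem_iota; have := ltn_ord (j l); move: hl; rewrite -val_eqE /=; lia.
move/eqP; rewrite !mulf_eq0 => /orP[/orP[|/orP[|/eqP //]]|].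
- rewrite prodf_seq_eq0 => /hasP [c]; rewrite mem_iota add0n subn0 => hc.
  by rewrite subr_eq0 eqr_nat => /eqP ceq; move: hc; rewrite -ceq; lia.
- rewrite prodf_seq_eq0 => /hasP [l _]; rewrite prodf_seq_eq0 => /hasP [c].
  rewrite mem_iota ffunE /= subr_eq0 eqr_nat => hc /eqP c0; move: hc; rewrite -c0; lia.
- rewrite /mon subn0 big1 ?mulr1; last by move=> a _; rewrite ffunE expr0.
  rewrite oner_eq0 orbF expf_eq0 => /andP[_ /eqP].
  rewrite -cR0 => /cR_inj /eqP; rewrite !mulf_eq0 (gt_eqF ht) (gt_eqF (@pi_gt0 R)) !orbF.
  by rewrite pnatr_eq0.
Qed.
End Sep2.
Section EE.
Local Open Scope classical_set_scope.
Variable R : realType.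
Local Notation C := R[i].
Lemma deriv_eps (f : R -> R) (d : R) : is_derive (0:R) (1:R) f d ->
  forall eps, 0 < eps -> exists2 del, 0 < del & forall t, `|t| < del ->
   `|f t - f 0 - t * d| <= eps * `|t|.
Proof.
move=> [df dv] eps e0.
have h1 : (fun h : R => h^-1 *: ((f \o shift 0) (h *: 1) - f 0)) @ 0^' --> 'D_1 f 0 := df.
rewrite dv in h1.
move: h1 => /cvgrPdist_le /(_ eps e0).
move=> /nbhs_ballP [e e0' he].
exists e => // t ht.
have [->|t0] := eqVneq t 0; first by rewrite !(subrr, mul0r, normr0, mulr0).
have := he t; rewrite /ball /= sub0r normrN => /(_ ht t0).
rewrite /= scaler1 addr0.
move=> hle.
have -> : f t - f 0 - t * d = - (t * (d - t^-1 *: (f t - f 0))).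
  rewrite /GRing.scale /= mulrBr mulrA divff // mul1r opprB.
  by [].
by rewrite normrN normrM mulrC ler_wpM2r.
Qed.
Lemma real_lin (f : R -> R) d c : is_derive (0:R) (1:R) f d ->
  forall eps, 0 < eps -> exists2 del, 0 < del & forall t, `|t| < del ->
   `|f (c * t) - f 0 - t * (c * d)| <= eps * `|t|.
Proof.
move=> hd eps e0.
have c1 : 0 < `|c| + 1 by rewrite ltr_pwDr.
have [d0 d00 hd0] := deriv_eps hd (divr_gt0 e0 c1).
exists (d0 / (`|c| + 1)); first by rewrite divr_gt0.
move=> t ht.
have hct : `|c * t| < d0.
  rewrite normrM; apply: le_lt_trans (_ : `|c| * `|t| <= (`|c| + 1) * `|t|) _.
    by rewrite ler_wpM2r // lerDl.
  by rewrite mulrC -ltr_pdivlMr.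
have := hd0 _ hct; rewrite mulrA [t * c]mulrC => /le_trans; apply.
rewrite normrM mulrA ler_wpM2r // mulrC -ler_pdivlMr //.
  rewrite (_ : eps / (eps / (`|c| + 1)) = `|c| + 1); first by rewrite lerDl.
  by field; rewrite !gt_eqF.
by rewrite divr_gt0.
Qed.
Lemma cmod_le (x : C) : cmod x <= `|re x| + `|im x|.
Proof.
have h : 0 <= `|re x| + `|im x| by rewrite addr_ge0.
rewrite /cmod -[X in _ <= X](ger0_norm h) -sqrtr_sqr ler_sqrt ?sqr_ge0 // sqrrD !real_normK ?num_real //.
have := mulr_ge0 (normr_ge0 (re x)) (normr_ge0 (im x)); lra.
Qed.
Lemma reB (x y : C) : re (x - y) = re x - re y.
Proof. by case: x; case: y. Qed.
Lemma cexpD (u v : C) : cexp (u + v) = cexp u * cexp v.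
Proof.
rewrite /cexp reD imD expRD cosD sinD.
case: u => a b; case: v => c d /=.
by apply/eqP; rewrite eq_complex /=; apply/andP; split; apply/eqP; ring.
Qed.
Lemma eeD (x y : C) : ee (x + y) = ee x * ee y.
Proof. by rewrite /ee mulrDr cexpD. Qed.
Lemma ee_cR (s : R) : ee (cR s) = Complex (cos (2 * pi * s)) (sin (2 * pi * s)).
Proof.
rewrite /ee (_ : cR (2 * pi) * ci R * cR s = ci R * cR (2 * pi * s)); last by rewrite !cRM; ring.
by rewrite /cexp re_cicR im_cicR expR0 !mul1r.
Qed.
Lemma ee_icR (s : R) : ee (ci R * cR s) = Complex (expR (- (2 * pi * s))) 0.
Proof.
rewrite /ee (_ : cR (2 * pi) * ci R * (ci R * cR s) = cR (- (2 * pi * s))); last first.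
  rewrite (_ : cR (2 * pi) * ci R * (ci R * cR s) = cR (2 * pi) * (ci R * ci R) * cR s); last by ring.
  by rewrite ci2 cRN !cRM; ring.
by rewrite /cexp recR imcR cos0 sin0 mulr1 mulr0.
Qed.
Lemma dif1_ee_r (r : R) : dif1 (fun t => ee (cR (t * r))) 1 (ci R * cR (2 * pi * r)).
Proof.
move=> eps e0.
have e2 : 0 < eps / 2 by rewrite divr_gt0.
have [d1 d10 h1] := real_lin (2 * pi * r) (is_derive_cos 0) e2.
have [d2 d20 h2] := real_lin (2 * pi * r) (is_derive_sin 0) e2.
exists (Num.min d1 d2); first by rewrite lt_min d10 d20.
move=> t; rewrite lt_min => /andP[t1 t2].
apply: le_trans (cmod_le _) _.
rewrite ee_cR (_ : cR t * (ci R * cR (2 * pi * r)) = ci R * cR (t * (2 * pi * r))); last by rewrite !cRM; ring.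
rewrite !reB !imB re_cicR im_cicR /=.
have := h1 _ t1; have := h2 _ t2.
rewrite sin0 cos0 oppr0 !mulr0 !mulr1 subr0.
rewrite (_ : 2 * pi * (t * r) = 2 * pi * r * t); last by ring.
rewrite !addr0; lra.
Qed.
Lemma dif1_ee_i (r : R) : dif1 (fun t => ee (ci R * cR (t * r))) 1 (ci R * (ci R * cR (2 * pi * r))).
Proof.
move=> eps e0.
have [d1 d10 h1] := real_lin (- (2 * pi * r)) (is_derive_expR 0) e0.
exists d1 => // t t1.
apply: le_trans (cmod_le _) _.
rewrite ee_icR (_ : cR t * (ci R * (ci R * cR (2 * pi * r))) = cR (- (t * (2 * pi * r)))); last first.
  rewrite (_ : cR t * (ci R * (ci R * cR (2 * pi * r))) = (ci R * ci R) * cR t * cR (2 * pi * r)); last by ring.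
  by rewrite ci2 cRN !cRM; ring.
rewrite !reB !imB recR imcR /=.
have := h1 _ t1.
rewrite expR0 mulr1 !subr0 normr0 addr0.
rewrite (_ : - (2 * pi * (t * r)) = - (2 * pi * r) * t); last by ring.
rewrite (_ : t * - (2 * pi * r) = - (t * (2 * pi * r))); last by ring.
by rewrite opprK.
Qed.
End EE.
Section Aff.
Variable R : realType.
Local Notation C := R[i].
Variable n : nat.
Local Notation vec := ('I_n -> C).
Lemma good_ee (A : vec -> C -> C) :
  (forall w tau v k, exists r : R, forall t,
     A (rpz w v t) (rpt tau k t) = A w tau + cR (t * r) /\
     A (ipz w v t) (ipt tau k t) = A w tau + ci R * cR (t * r)) ->
  good (fun w tau => ee (A w tau)).
Proof.
move=> hA w tau ht v k; have [r hr] := hA w tau v k.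
exists (ee (A w tau) * (ci R * cR (2 * pi * r))); split.
  apply: dif1_ext (dif1_scal (ee (A w tau)) (dif1_ee_r r)) => [t||]; last by [].
    by rewrite (hr t).1 eeD.
  by rewrite mulr1.
apply: dif1_ext (dif1_scal (ee (A w tau)) (dif1_ee_i r)) => [t||].
- by rewrite (hr t).2 eeD.
- by rewrite mulr1.
- by ring.
Qed.
Variable L : 'M[rat]_n.
Variables lam mu : 'I_n -> int.
Definition sh (w : vec) (tau : C) : vec := fun a => w a - (lam a)%:~R * tau - (mu a)%:~R.
Definition vsh (v : 'I_n -> R) (k : R) : 'I_n -> R := fun a => v a - (lam a)%:~R * k.
Lemma sh_rp w tau v k t : sh (rpz w v t) (rpt tau k t) = rpz (sh w tau) (vsh v k) t.
Proof.
apply: funext => a; rewrite /sh /rpz /rpt /vsh -cRz !(cRM, cRB, cRD, cRN); ring.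
Qed.
Lemma sh_ip w tau v k t : sh (ipz w v t) (ipt tau k t) = ipz (sh w tau) (vsh v k) t.
Proof.
apply: funext => a; rewrite /sh /ipz /ipt /vsh -cRz !(cRM, cRB, cRD, cRN); ring.
Qed.
Lemma good_sh f : good f -> good (fun w tau => f (sh w tau) tau).
Proof.
move=> hf w tau ht v k.
have [D [h1 h2]] := hf (sh w tau) tau ht (vsh v k) k.
exists D; split.
  by apply: dif1_ext h1 => // t; rewrite sh_rp.
by apply: dif1_ext h2 => // t; rewrite sh_ip.
Qed.
Definition LqR (y : 'I_n -> R) : R := \sum_a \sum_b (lam a)%:~R * ratr (L a b) * y b.
Lemma cR_sum (I : Type) (r : seq I) (F : I -> R) : cR (\sum_(i <- r) F i) = \sum_(i <- r) cR (F i).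
Proof. by rewrite cRE rmorph_sum. Qed.
Lemma Lq_add (x y : vec) : Lq L (ivec lam) (fun b => x b + y b) = Lq L (ivec lam) x + Lq L (ivec lam) y.
Proof.
rewrite /Lq -big_split; apply: eq_bigr => a _; rewrite -big_split; apply: eq_bigr => b _.
by rewrite mulrDr.
Qed.
Lemma Lq_scal (s : C) (y : vec) : Lq L (ivec lam) (fun b => s * y b) = s * Lq L (ivec lam) y.
Proof.
rewrite /Lq mulr_sumr; apply: eq_bigr => a _; rewrite mulr_sumr; apply: eq_bigr => b _.
by ring.
Qed.
Lemma Lq_real (y : 'I_n -> R) : Lq L (ivec lam) (fun b => cR (y b)) = cR (LqR y).
Proof.
rewrite /Lq /LqR cR_sum; apply: eq_bigr => a _; rewrite cR_sum; apply: eq_bigr => b _.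
by rewrite /ivec cRM cRM cRz cRq.
Qed.
Lemma LqR_scal (t : R) (y : 'I_n -> R) : LqR (fun b => t * y b) = t * LqR y.
Proof.
rewrite /LqR mulr_sumr; apply: eq_bigr => a _; rewrite mulr_sumr; apply: eq_bigr => b _.
by ring.
Qed.
Definition Aff (w : vec) (tau : C) : C :=
  - (Lq L (ivec lam) (ivec lam) * tau) - 2 * Lq L (ivec lam) (sh w tau).
Lemma ivecE : @ivec R n lam = fun b => cR ((lam b)%:~R).
Proof. by apply: funext => b; rewrite cRz. Qed.
Lemma Lq_ll : Lq L (ivec lam) (ivec lam) = cR (LqR (fun b => (lam b)%:~R)).
Proof. by rewrite -Lq_real; congr (Lq _ _ _); apply: funext => b; rewrite cRz. Qed.
Lemma good_Aff : good (fun w tau => ee (Aff w tau)).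
Proof.
apply: good_ee => w tau v k.
set r := - (LqR (fun b => (lam b)%:~R) * k) - 2 * LqR (vsh v k).
exists r => t; split.
  rewrite /Aff sh_rp /rpz /rpt Lq_add Lq_real LqR_scal Lq_ll /r.
  rewrite !(cRM, cRD, cRB, cRN, cR1); ring.
rewrite /Aff sh_ip /ipz /ipt Lq_add Lq_scal Lq_real LqR_scal Lq_ll /r.
rewrite !(cRM, cRD, cRB, cRN, cR1); ring.
Qed.
End Aff.
Section Expand.
Variable R : realType.
Local Notation C := R[i].
Variable n : nat.
Local Notation vec := ('I_n -> C).
Variable B : nat.
Local Notation idx := {ffun 'I_n -> 'I_B.+1}.
Lemma binom_wide (x y : C) (m : nat) : (m <= B)%N ->
  (y + x) ^+ m = \sum_(k < B.+1) x ^+ (m - k) * y ^+ k *+ 'C(m, k).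
Proof.
move=> hm; rewrite addrC exprDn.
rewrite (big_ord_widen B.+1 (fun k => x ^+ (m - k) * y ^+ k *+ 'C(m, k))) // big_mkcond.
apply: eq_bigr => k _; case: ifP => // /negbT; rewrite -leqNgt => hk.
by rewrite bin_small // mulr0n.
Qed.
Lemma shift_expand (c : idx -> C) (Y Lm : 'I_n -> C) :
  \sum_(j : idx) c j * \prod_a (Y a + Lm a) ^+ (j a) =
  \sum_(k : idx) (\sum_(j : idx) c j * \prod_a (Lm a ^+ (j a - k a) *+ 'C(j a, k a)))
     * \prod_a Y a ^+ (k a).
Proof.
transitivity (\sum_(j : idx) \sum_(k : idx) c j *
   ((\prod_a (Lm a ^+ (j a - k a) *+ 'C(j a, k a))) * \prod_a Y a ^+ (k a))).
  apply: eq_bigr => j _.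
  rewrite (eq_bigr (fun a => \sum_(k < B.+1) Lm a ^+ (j a - k) * Y a ^+ k *+ 'C(j a, k))); last first.
    by move=> a _; rewrite binom_wide // -ltnS ltn_ord.
  rewrite bigA_distr_bigA mulr_sumr; apply: eq_bigr => K _; rewrite -big_split /=.
  congr (_ * _); apply: eq_bigr => a _; by rewrite mulrnAl.
rewrite exchange_big; apply: eq_bigr => k _; rewrite mulr_suml; apply: eq_bigr => j _.
by rewrite mulrA.
Qed.
End Expand.
Section HF.
Variable R : realType.
Local Notation C := R[i].
Variable n : nat.
Local Notation vec := ('I_n -> C).
Variable L : 'M[rat]_n.
Variables lam mu : 'I_n -> int.
Variable D : nat.
Local Notation idx := {ffun 'I_n -> 'I_D.+1}.
Variable phi : coef_family R n.
Definition Hfam : 'I_D.+1 -> idx -> vec -> C -> C := fun i k w tau =>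
  phi i (mindex k) w tau - ee (Aff L lam mu w tau) *
   \sum_(j : idx) phi i (mindex j) (sh lam mu w tau) tau *
      \prod_a ((- (lam a)%:~R) ^+ (j a - k a) *+ 'C(j a, k a)).
Lemma Hfam_good : (forall i j, holomorphic (phi i j)) -> Gd Hfam.
Proof.
move=> hol i k; apply: good_sub; first exact: holo_good.
apply: good_mul; first exact: good_Aff.
apply: good_sum => j; apply: good_mul; last exact: good_cst.
by apply: (good_sh lam mu (holo_good (hol i (mindex j)))).
Qed.
Lemma im_sh (w : vec) tau a : im (sh lam mu w tau a) = im (w a) - (lam a)%:~R * im tau.
Proof. by rewrite /sh !imB -!cRz imcRM imcR subr0. Qed.
Lemma alpha_sh (w : vec) tau a : 0 < im tau ->
  alpha (sh lam mu w tau) tau a = alpha w tau a + (- (lam a)%:~R).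
Proof.
move=> ht; rewrite /alpha im_sh -cRz -cRN -cRD; congr cR.
by field; rewrite gt_eqF.
Qed.
Lemma Hfam_Zs :
  (forall (z : vec) (tau : C), 0 < im tau ->
     eval_ah D phi (fun l => z l + (lam l)%:~R * tau + (mu l)%:~R) tau
       = ee (- (Lq L (ivec lam) (ivec lam) * tau) - 2 * Lq L (ivec lam) z)
         * eval_ah D phi z tau) ->
  Zs Hfam.
Proof.
move=> hell w tau ht.
have hE := hell (sh lam mu w tau) tau ht.
rewrite (_ : (fun l => sh lam mu w tau l + (lam l)%:~R * tau + (mu l)%:~R) = w) in hE; last first.
  by apply: funext => l; rewrite /sh; ring.
rewrite -/(Aff L lam mu w tau) in hE.
set c := cR (8 * pi * im tau).
have c0 : c != 0.
  rewrite /c -cR0; apply/eqP => /cR_inj /eqP; rewrite !mulf_eq0 (gt_eqF ht) (gt_eqF (@pi_gt0 R)) !orbF.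
  by rewrite pnatr_eq0.
have nuE : nu tau = c^-1 by rewrite /nu /c cRV.
have cX (i : 'I_D.+1) : c ^+ (D - i) = c ^+ D * nu tau ^+ i.
  by rewrite nuE exprVn exprB ?unitfE // -ltnS ltn_ord.
transitivity (c ^+ D * (eval_ah D phi w tau - ee (Aff L lam mu w tau) * eval_ah D phi (sh lam mu w tau) tau));
  last by rewrite -hE subrr mulr0.
rewrite mulrBr /eval_ah mulr_sumr mulr_sumr mulr_sumr -sumrB; apply: eq_bigr => i _.
rewrite /Hfam.
under eq_bigr do rewrite mulrBl.
rewrite sumrB; congr (_ - _).
  rewrite mulr_sumr; apply: eq_bigr => k _; rewrite /mon -/c cX /mindex; under [in RHS]eq_bigr do rewrite ffunE.
  set P := \prod_(a < n) _; set X := c ^+ D; set Y := nu tau ^+ i; ring.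
transitivity (ee (Aff L lam mu w tau) * c ^+ D * nu tau ^+ i *
  \sum_(j : idx) phi i (mindex j) (sh lam mu w tau) tau * \prod_a (alpha w tau a + (- (lam a)%:~R)) ^+ (j a)).
  rewrite shift_expand mulr_sumr; apply: eq_bigr => k _.
  rewrite /mon -/c cX; set S := \sum_(j : idx) _; set P := \prod_(a < n) _.
  set X := c ^+ D; set Y := nu tau ^+ i; set E := ee _; ring.
rewrite [in RHS]mulr_sumr [in RHS]mulr_sumr mulr_sumr; apply: eq_bigr => j _.
have hP : \prod_(a < n) alpha (sh lam mu w tau) tau a ^+ mindex j a =
    \prod_a (alpha w tau a + (- (lam a)%:~R)) ^+ (j a).
  by apply: eq_bigr => a _; rewrite alpha_sh // /mindex ffunE.
rewrite hP; set P := \prod_(a < n) _.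
set X := c ^+ D; set Y := nu tau ^+ i; set E := ee _; ring.
Qed.
End HF.
Section Taylor.
Variable R : realType.
Local Notation C := R[i].
Variable n : nat.
Variable D : nat.
Variable lam : 'I_n -> int.
Local Notation idx := {ffun 'I_n -> 'I_D.+1}.
Local Notation nidx := {ffun 'I_n -> nat}.
Definition dl (c : nidx -> C) : nidx -> C := fun j =>
  \sum_(l < n) (lam l)%:~R * ((j l).+1)%:R * c (Defs.bump j l).
Definition supp (c : nidx -> C) := forall j : nidx, [exists a, (D < j a)%N] -> c j = 0.
Definition lp (j : idx) : C := \prod_a (lam a)%:~R ^+ (j a).
Definition dg (j : idx) : nat := \sum_a (j a : nat).
Definition Pc (c : nidx -> C) : {poly C} := \sum_(j : idx) (c (mindex j) * lp j) *: 'X^(dg j).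
Definition shl (l : 'I_n) (j : idx) : idx := [ffun a => if a == l then ordS (j a) else j a].
Lemma shl_inj l : injective (shl l).
Proof.
move=> j1 j2 /ffunP h; apply/ffunP => a; have := h a; rewrite !ffunE.
by case: (a == l) => //; apply: ordS_inj.
Qed.
Lemma dl_supp c : supp c -> supp (dl c).
Proof.
move=> hc j /existsP [a ha]; apply: big1 => l _.
rewrite hc ?mulr0 //; apply/existsP; exists a; rewrite /Defs.bump ffunE.
by case: (a == l) => //; apply: leq_trans ha _.
Qed.
Lemma iter_supp c k : supp c -> supp (iter k dl c).
Proof. by move=> hc; elim: k => [|k IH] //=; apply: dl_supp. Qed.
Lemma ordS_val (i : 'I_D.+1) : (i < D)%N -> (ordS i : nat) = i.+1.
Proof. by move=> hi; rewrite /ordS /= modn_small. Qed.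
Lemma ordS_max (i : 'I_D.+1) : (i : nat) = D -> (ordS i : nat) = 0%N.
Proof. by move=> hi; rewrite /ordS /= hi modnn. Qed.
Lemma P_dl c : supp c -> Pc (dl c) = (Pc c)^`().
Proof.
move=> hc.
rewrite /Pc raddf_sum /=.
transitivity (\sum_(l < n) \sum_(j : idx)
   ((lam l)%:~R * ((mindex j l).+1)%:R * c (Defs.bump (mindex j) l) * lp j) *: 'X^(dg j)).
  rewrite exchange_big; apply: eq_bigr => j _; rewrite /dl mulr_suml scaler_suml.
  by apply: eq_bigr => l _.
transitivity (\sum_(l < n) \sum_(j : idx)
   (((j l : nat)%:R * c (mindex j) * lp j) *: 'X^((dg j).-1))); last first.
  rewrite exchange_big; apply: eq_bigr => j _.
  rewrite derivZ derivXn -scaler_nat scalerA -scaler_suml; congr (_ *: _).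
  rewrite /dg natr_sum mulr_sumr; apply: eq_bigr => l _; ring.
apply: eq_bigr => l _.
rewrite [in RHS](reindex_inj (shl_inj (l := l))) /=; apply: eq_bigr => j _.
have [hl|hl] := ltnP (j l) D.
  have e1 : shl l j l = ordS (j l) by rewrite ffunE eqxx.
  have e2 : mindex (shl l j) = Defs.bump (mindex j) l.
    apply/ffunP => a; rewrite !ffunE; case: eqP => [->|]; last by [].
    by rewrite ordS_val.
  have e3 : lp (shl l j) = (lam l)%:~R * lp j.
    rewrite /lp (bigD1 l) //= [in RHS](bigD1 l) //= e1 ordS_val // exprS -!mulrA; congr (_ * _).
    congr (_ * _); apply: eq_bigr => a hal; by rewrite ffunE (negbTE hal).
  have e4 : dg (shl l j) = (dg j).+1.
    rewrite /dg (bigD1 l) //= [in RHS](bigD1 l) //= e1 ordS_val // addSn; congr (S (_ + _)).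
    apply: eq_bigr => a hal; by rewrite ffunE (negbTE hal).
  rewrite e1 e2 e3 e4 ordS_val //= /mindex ffunE; congr (_ *: _); ring.
have hD : (j l : nat) = D by apply/eqP; rewrite eqn_leq hl -ltnS ltn_ord.
have e1 : (shl l j l : nat) = 0%N by rewrite ffunE eqxx ordS_max.
rewrite e1 mul0r mul0r scale0r.
rewrite hc ?mulr0 ?mul0r ?scale0r //; apply/existsP; exists l.
by rewrite /Defs.bump !ffunE eqxx hD.
Qed.
Lemma Pc_iter c k : supp c -> Pc (iter k dl c) = (Pc c)^`(k).
Proof.
move=> hc; elim: k => [|k IH]; first by rewrite derivn0.
have -> : iter k.+1 dl c = dl (iter k dl c) by [].
rewrite P_dl; last exact: iter_supp.
by rewrite IH derivnS.
Qed.
Lemma Pc_0 c : (Pc c).[0] = c (mzero n).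
Proof.
rewrite /Pc horner_sum (bigD1 ([ffun => ord0] : idx)) //= big1 ?addr0; last first.
  move=> j hj; rewrite hornerZ hornerXn expr0n.
  case: eqP => [/eqP|]; last by rewrite mulr0.
  rewrite /dg sum_nat_eq0 => /forallP h; move: hj; case/eqP.
  by apply/ffunP => a; rewrite ffunE; apply/val_inj => /=; apply/eqP; exact: (h a).
rewrite hornerZ hornerXn.
have -> : dg ([ffun => ord0] : idx) = 0%N by rewrite /dg big1 // => a _; rewrite ffunE.
have -> : lp ([ffun => ord0] : idx) = 1 by rewrite /lp big1 // => a _; rewrite ffunE expr0.
have -> : mindex ([ffun => ord0] : idx) = mzero n by apply/ffunP => a; rewrite !ffunE.
by rewrite expr0 !mulr1.
Qed.
Lemma size_Pc c : (size (Pc c) <= (n * D).+1)%N.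
Proof.
apply: leq_trans (size_sum _ _ _) _; apply/bigmax_leqP => j _.
apply: leq_trans (size_scale_leq _ _) _; rewrite size_polyXn ltnS /dg.
apply: leq_trans (_ : (\sum_(a < n) D <= n * D)%N); last by rewrite sum_nat_const card_ord.
by apply: leq_sum => a _; rewrite -ltnS.
Qed.
Lemma taylor (phi : coef_family R n) z tau : bounded_support D phi -> forall N, (n * D < N)%N ->
  \sum_(k < N) ((-1) ^+ k / (k`!)%:R) * Tlam_pow lam k phi z tau =
  \sum_(j : idx) phi 0%N (mindex j) z tau * \prod_a (- (lam a)%:~R) ^+ (j a).
Proof.
move=> hb N hN.
set c : nidx -> C := fun j => phi 0%N j z tau.
have hc : supp c by move=> j hj; rewrite /c hb // hj orbT.
have hit : forall k j, iter k (dlam lam) phi 0%N j z tau = iter k dl c j.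
  elim=> [|k IH] j //=; rewrite /dlam /dl; apply: eq_bigr => l _; by rewrite IH.
have hT k : Tlam_pow lam k phi z tau = (Pc c)`_k *+ k`!.
  by rewrite /Tlam_pow /qj_part hit -Pc_0 Pc_iter // horner_coef0 coef_derivn addn0 ffactnn.
transitivity (\sum_(k < N) (Pc c)`_k * (-1) ^+ k).
  apply: eq_bigr => k _; rewrite hT -mulr_natr.
  have hf : (k`!)%:R != 0 :> C by rewrite pnatr_eq0 -lt0n fact_gt0.
  by field.
rewrite -horner_coef_wide; last by apply: leq_trans (size_Pc c) _.
rewrite /Pc horner_sum; apply: eq_bigr => j _; rewrite hornerZ hornerXn -mulrA; congr (_ * _).
rewrite /lp /dg expr_sum -big_split; apply: eq_bigr => a _.
change (((lam a)%:~R : C) ^+ j a * (-1) ^+ j a = (- (lam a)%:~R) ^+ j a).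
by rewrite -exprMn mulrN1.
Qed.
End Taylor.
Theorem lemma3 (R : realType) (n : nat) (L : 'M[rat]_n) (hL : good_index L)
    (K : nat) (w : 'I_K -> int) (D : nat) (Phi : 'I_K -> coef_family R n)
    (hPhi : forall t, ah_weak_jacobi (w t) L D (Phi t))
    (lam mu : 'I_n -> int) (z : 'I_n -> R[i]) (tau : R[i]) (htau : 0 < im tau) :
  let phi := fun z tau => \sum_(t < K) qj_part (Phi t) z tau in
  exists N0 : nat, forall N : nat, (N0 <= N)%N ->
    phi (fun l => z l + (lam l)%:~R * tau + (mu l)%:~R) tau
    = ee (- (Lq L (ivec lam) (ivec lam) * tau) - 2 * Lq L (ivec lam) z)
      * \sum_(i < N) ((-1) ^+ i / (i`!)%:R)
          * \sum_(t < K) Tlam_pow lam i (Phi t) z tau.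
Proof.
move=> phi; exists (n * D).+1 => N hN.
set z' := fun l => z l + (lam l)%:~R * tau + (mu l)%:~R.
set E := ee _.
have hsh : sh lam mu z' tau = z by apply: funext => l; rewrite /sh /z'; ring.
have key : forall t, qj_part (Phi t) z' tau =
    E * \sum_(j : {ffun 'I_n -> 'I_D.+1}) Phi t 0%N (mindex j) z tau * \prod_a (- (lam a)%:~R) ^+ (j a).
  move=> t; have [hb [hhol [_ hell]]] := hPhi t.
  have hG := @Hfam_good R n L lam mu D (Phi t) (fun i j => (hhol i j).1).
  have hZ := Hfam_Zs (hell lam mu).
  have := sep hG hZ z' htau; rewrite /Hfam hsh.
  have -> : Aff L lam mu z' tau = - (Lq L (ivec lam) (ivec lam) * tau) - 2 * Lq L (ivec lam) z.
    by rewrite /Aff hsh.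
  have -> : mindex ([ffun => ord0] : {ffun 'I_n -> 'I_D.+1}) = mzero n.
    by apply/ffunP => a; rewrite !ffunE.
  move/eqP; rewrite subr_eq0 => /eqP h.
  rewrite /qj_part (_ : 0%N = nat_of_ord (ord0 : 'I_D.+1)) // h -/E; congr (_ * _).
  apply: eq_bigr => j _; congr (_ * _); apply: eq_bigr => a _.
  by rewrite ffunE subn0 bin0 mulr1n.
rewrite /phi (eq_bigr _ (fun t _ => key t)) -mulr_sumr; congr (_ * _).
under [RHS]eq_bigr do rewrite mulr_sumr.
rewrite [RHS]exchange_big; apply: eq_bigr => t _.
have [hb _] := hPhi t.
by rewrite (taylor lam z tau hb hN).
Qed.
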